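(* Let $S_X,S_Y$ be finite nonempty action sets, $\varphi:S_X\times S_Y\to\mathbb{R}$ and $\lambda\in[0,1)$. Suppose $\sigma_X:\mathcal{H}\to\Delta(S_X)$ is $(\varphi,\lambda)$-autocratic. Let $\mathcal{H}_Y=\bigcup_{t\ge0}S_Y^t$ (with $S_Y^0=\{\varnothing\}$ the empty history). Then there exists an opponent-conditioned strategy $\widetilde\sigma_X:\mathcal{H}_Y\to\Delta(S_X)$ that is also $(\varphi,\lambda)$-autocratic.
   Context: Two players $X,Y$ play a repeated game with finite action sets $S_X,S_Y$; $\Delta(S)$ denotes the probability distributions on $S$. Histories: $\mathcal{H}=\bigcup_{T\ge0}(S_X\times S_Y)^T$; behavioral strategies are maps $\sigma:\mathcal{H}\to\Delta(S)$; players independently draw actions each round from their strategies evaluated at the history of realized action pairs of previous rounds, with $\mathbb{E}_{\sigma_X,\sigma_Y}$ the expectation over the resulting play. An opponent-conditioned strategy $\widetilde\sigma_X:\mathcal{H}_Y\to\Delta(S_X)$ is the behavioral strategy that in round $t$ plays $\widetilde\sigma_X[s_Y^0,\dots,s_Y^{t-1}]$, where $s_Y^0,\dots,s_Y^{t-1}$ are $Y$'s realized past actions. A strategy $\sigma_X$ is $(\varphi,\lambda)$-autocratic if for every behavioral strategy $\sigma_Y$ of $Y$, $\mathbb{E}_{\sigma_X,\sigma_Y}\big[(1-\lambda)\sum_{t\ge0}\lambda^t\varphi(s_X^t,s_Y^t)\big]=0$. *)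

(* Defs.v *)
From mathcomp Require Import all_boot all_order all_algebra.
From mathcomp Require Import all_classical all_reals all_analysis.
Set Implicit Arguments. Unset Strict Implicit. Unset Printing Implicit Defensive.
Import Order.TTheory GRing.Theory Num.Theory.
Local Open Scope classical_set_scope.
Local Open Scope ring_scope.

Record distr (R : realType) (T : finType) := Distr {
  pmf :> T -> R;
  pmf_ge0 : forall x, 0 <= pmf x;
  pmf_sum1 : \sum_(x : T) pmf x = 1 }.

Definition history (SX SY : finType) := seq (SX * SY)%type.

Definition strategy (R : realType) (SX SY : finType) (S : finType) :=
  history SX SY -> distr R S.

Fixpoint hprob (R : realType) (SX SY : finType)
  (sX : strategy R SX SY SX) (sY : strategy R SX SY SY)
  (pre : history SX SY) (h : history SX SY) : R :=
  match h with
  | [::] => 1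
  | (x, y) :: h' => sX pre x * sY pre y * hprob sX sY (rcons pre (x, y)) h'
  end.

Definition stage_exp (R : realType) (SX SY : finType) (phi : SX -> SY -> R)
  (sX : strategy R SX SY SX) (sY : strategy R SX SY SY) (t : nat) : R :=
  \sum_(h : (t.+1).-tuple (SX * SY)%type)
     hprob sX sY [::] h * phi (tnth h ord_max).1 (tnth h ord_max).2.

(* (phi,lambda)-autocratic: for every behavioral strategy of Y, the expected
   normalized discounted sum (1-lambda) sum_t lambda^t phi(s^t) is 0.
   Since phi is bounded and lambda<1, this expectation equals the series
   of expected stage payoffs; we require that series to converge to 0. *)
Definition disc_partial (R : realType) (SX SY : finType) (phi : SX -> SY -> R)
  (lam : R) (sX : strategy R SX SY SX) (sY : strategy R SX SY SY) (n : nat) : R :=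
  \sum_(t < n) (1 - lam) * lam ^+ t * stage_exp phi sX sY t.

Definition autocratic (R : realType) (SX SY : finType) (phi : SX -> SY -> R)
  (lam : R) (sX : strategy R SX SY SX) : Prop :=
  forall sY : strategy R SX SY SY,
    disc_partial phi lam sX sY @ \oo --> 0.

Definition opp_conditioned (R : realType) (SX SY : finType)
  (f : seq SY -> distr R SX) : strategy R SX SY SX :=
  fun h => f (map snd h).

(* Main.v *)
Require Import Defs.
From mathcomp Require Import all_boot all_order all_algebra.
From mathcomp Require Import all_classical all_reals all_analysis.
From mathcomp Require Import ring.
Import Order.TTheory GRing.Theory Num.Theory.
Set Implicit Arguments. Unset Strict Implicit.
Local Open Scope ring_scope.

Lemma big_tuple_rcons (R : realType) (T : finType) n (G : n.+1.-tuple T -> R) :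
  \sum_(h : n.+1.-tuple T) G h = \sum_(s : n.-tuple T) \sum_(p : T) G (rcons_tuple s p).
Proof.
rewrite pair_big /=.
pose f := fun sp : n.-tuple T * T => rcons_tuple sp.1 sp.2.
pose g := fun h : n.+1.-tuple T =>
  ((belast_tuple (thead h) (behead_tuple h) : n.-tuple T), last (thead h) (behead h)).
rewrite (reindex f) /=; last first.
  exists g => [[s p] _|h _].
  - rewrite /g /f; congr pair; last first.
      case: s => [[|a s'] Hs] //=. by rewrite last_rcons.
    apply: val_inj => /=.
    case: s => [[|a s'] Hs] //=. by rewrite belast_rcons.
  - apply: val_inj => /=. case/tupleP: h => x t /=.
    by rewrite -lastI.
by apply: eq_bigr => -[s p].
Qed.

Definition sumT (R : realType) (T : finType) n (F : seq T -> R) : R :=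
  \sum_(s : n.-tuple T) F s.

Lemma sumTS (R : realType) (T : finType) n (F : seq T -> R) :
  sumT n.+1 F = sumT n (fun s => \sum_p F (rcons s p)).
Proof. by rewrite /sumT big_tuple_rcons. Qed.

Lemma sumT0 (R : realType) (T : finType) (F : seq T -> R) : sumT 0 F = F [::].
Proof.
rewrite /sumT (eq_bigr (fun _ => F [::])); last first.
  by move=> s _; rewrite (size0nil (size_tuple s)).
by rewrite sumr_const card_tuple expn0.
Qed.

Lemma eq_sumT (R : realType) (T : finType) n (F G : seq T -> R) :
  (forall s, size s = n -> F s = G s) -> sumT n F = sumT n G.
Proof. by move=> H; apply: eq_bigr => s _; apply: H; rewrite size_tuple. Qed.

Lemma sumT_ge0 (R : realType) (T : finType) n (F : seq T -> R) :
  (forall s, size s = n -> 0 <= F s) -> 0 <= sumT n F.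
Proof. by move=> H; apply: sumr_ge0 => s _; apply: H; rewrite size_tuple. Qed.

Lemma sumT_zip (R : realType) (SX SY : finType) n (F : seq (SX * SY) -> R) :
  sumT n F = sumT n (fun xs => sumT n (fun ys => F (zip xs ys))).
Proof.
elim: n F => [|n IH] F; first by rewrite !sumT0.
rewrite sumTS IH sumTS; apply: eq_sumT => xs Hxs.
under [RHS]eq_bigr do rewrite sumTS.
rewrite /sumT [RHS]exchange_big /=; apply: eq_bigr => ys _.
rewrite pair_big /=; apply: eq_bigr => -[x y] _ /=.
by rewrite zip_rcons // !size_tuple.
Qed.

Fixpoint hw (R : realType) (SX SY : finType) (a : history SX SY -> SX -> R)
  (b : history SX SY -> SY -> R) (pre h : history SX SY) : R :=
  match h with
  | [::] => 1
  | (x, y) :: h' => a pre x * b pre y * hw a b (rcons pre (x, y)) h'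
  end.

Lemma hprob_hw (R : realType) (SX SY : finType) (sX : strategy R SX SY SX)
  (sY : strategy R SX SY SY) pre h :
  hprob sX sY pre h = hw (fun k => sX k) (fun k => sY k) pre h.
Proof. by elim: h pre => [|[x y] h IH] pre //=; rewrite IH. Qed.

Lemma hw_rcons (R : realType) (SX SY : finType) a b (pre h : history SX SY) p :
  hw (R:=R) a b pre (rcons h p) = hw a b pre h * a (pre ++ h) p.1 * b (pre ++ h) p.2.
Proof.
elim: h pre => [|[x y] h IH] pre /=.
  by case: p => x y /=; rewrite cats0 !mulr1 mul1r.
by rewrite IH cat_rcons !mulrA.
Qed.

Lemma hw_split (R : realType) (SX SY : finType) a b (pre h : history SX SY) :
  hw (R:=R) a b pre h = hw a (fun _ _ => 1) pre h * hw (fun _ _ => 1) b pre h.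
Proof.
elim: h pre => [|[x y] h IH] pre /=; first by rewrite mulr1.
rewrite IH; ring.
Qed.

Lemma hw_ge0 (R : realType) (SX SY : finType) a b (pre h : history SX SY) :
  (forall k x, 0 <= a k x) -> (forall k y, 0 <= b k y) -> 0 <= hw (R:=R) a b pre h.
Proof.
move=> Ha Hb; elim: h pre => [|[x y] h IH] pre /=; first exact: ler01.
by rewrite !mulr_ge0.
Qed.

Definition Aw (R : realType) (SX SY : finType) (sX : strategy R SX SY SX) h :=
  hw (fun k => sX k) (fun _ _ => 1) [::] h.

Lemma sumA (R : realType) (SX SY : finType) (sX : strategy R SX SY SX) n ys :
  size ys = n -> sumT n (fun xs => Aw sX (zip xs ys)) = 1.
Proof.
elim: n ys => [|n IH] ys Hys.
  by rewrite sumT0 (size0nil Hys).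
case/lastP: ys Hys => [|ys b]; first by [].
rewrite size_rcons => -[Hys].
rewrite sumTS -(IH ys Hys); apply: eq_sumT => xs Hxs.
rewrite /Aw.
under eq_bigr do rewrite zip_rcons ?Hxs // hw_rcons /= mulr1.
by rewrite -big_distrr /= Defs.pmf_sum1 mulr1.
Qed.

Definition fval (R : realType) (SX SY : finType) (sX : strategy R SX SY SX)
  (ys : seq SY) (a : SX) : R :=
  sumT (size ys) (fun xs => Aw sX (zip xs ys) * sX (zip xs ys) a).

Lemma fval_ge0 (R : realType) (SX SY : finType) (sX : strategy R SX SY SX) ys a :
  0 <= fval sX ys a.
Proof.
apply: sumT_ge0 => s _; apply: mulr_ge0; last exact: Defs.pmf_ge0.
apply: hw_ge0 => k x /=; [exact: Defs.pmf_ge0 | exact: ler01].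
Qed.


Lemma fval_sum1 (R : realType) (SX SY : finType) (sX : strategy R SX SY SX) ys :
  \sum_a fval sX ys a = 1.
Proof.
rewrite /fval /sumT exchange_big /=.
rewrite -(sumA sX (erefl (size ys))); apply: eq_bigr => xs _.
by rewrite -big_distrr /= Defs.pmf_sum1 mulr1.
Qed.

Definition fX (R : realType) (SX SY : finType) (sX : strategy R SX SY SX)
  (ys : seq SY) : distr R SX := Distr (fval_ge0 sX ys) (fval_sum1 sX ys).

Definition Bw (R : realType) (SX SY : finType) (sX : strategy R SX SY SX)
  (sY : strategy R SX SY SY) h :=
  hw (fun k => fX sX (map snd k)) (fun k => sY k) [::] h.

Definition Nw (R : realType) (SX SY : finType) (sX : strategy R SX SY SX)
  (sY : strategy R SX SY SY) (ys : seq SY) :=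
  sumT (size ys) (fun xs => Bw sX sY (zip xs ys)).

Definition Mw (R : realType) (SX SY : finType) (sX : strategy R SX SY SX)
  (sY : strategy R SX SY SY) (ys : seq SY) (b : SY) :=
  sumT (size ys) (fun xs => Bw sX sY (zip xs ys) * sY (zip xs ys) b).

Definition sYp (R : realType) (SX SY : finType) (sX : strategy R SX SY SX)
  (sY : strategy R SX SY SY) (h : history SX SY) (b : SY) : R :=
  if Nw sX sY (map snd h) == 0 then sY h b
  else Mw sX sY (map snd h) b / Nw sX sY (map snd h).

Lemma Bw_ge0 (R : realType) (SX SY : finType) (sX : strategy R SX SY SX)
  (sY : strategy R SX SY SY) h : 0 <= Bw sX sY h.
Proof. by apply: hw_ge0 => k x; apply: Defs.pmf_ge0. Qed.

Lemma Nw_ge0 (R : realType) (SX SY : finType) (sX : strategy R SX SY SX)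
  (sY : strategy R SX SY SY) ys : 0 <= Nw sX sY ys.
Proof. by apply: sumT_ge0 => s _; exact: Bw_ge0. Qed.

Lemma Mw_ge0 (R : realType) (SX SY : finType) (sX : strategy R SX SY SX)
  (sY : strategy R SX SY SY) ys b : 0 <= Mw sX sY ys b.
Proof.
by apply: sumT_ge0 => s _; apply: mulr_ge0; [exact: Bw_ge0 | exact: Defs.pmf_ge0].
Qed.

Lemma Mw_eq (R : realType) (SX SY : finType) (sX : strategy R SX SY SX)
  (sY : strategy R SX SY SY) h b :
  Mw sX sY (map snd h) b = Nw sX sY (map snd h) * sYp sX sY h b.
Proof.
rewrite /sYp; case: eqP => [N0|Nn0]; last first.
  by rewrite mulrC divfK //; apply/eqP.
rewrite N0 mul0r.
move: N0; rewrite /Nw /sumT => N0.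
have H := psumr_eq0P (fun j _ => Bw_ge0 sX sY _) N0.
rewrite /Mw /sumT big1 // => i _.
by rewrite H ?mul0r.
Qed.

Lemma Nw_rcons (R : realType) (SX SY : finType) (sX : strategy R SX SY SX)
  (sY : strategy R SX SY SY) ys b :
  Nw sX sY (rcons ys b) = Mw sX sY ys b.
Proof.
rewrite /Nw /Mw size_rcons sumTS; apply: eq_sumT => xs Hxs.
rewrite /Bw.
under eq_bigr do rewrite zip_rcons ?Hxs // hw_rcons /=.
by rewrite -big_distrl -big_distrr /= fval_sum1 mulr1.
Qed.

Lemma sYp_ge0 (R : realType) (SX SY : finType) (sX : strategy R SX SY SX)
  (sY : strategy R SX SY SY) h b : 0 <= sYp sX sY h b.
Proof.
rewrite /sYp; case: eqP => _; first exact: Defs.pmf_ge0.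
by apply: divr_ge0; [exact: Mw_ge0 | exact: Nw_ge0].
Qed.

Lemma sYp_sum1 (R : realType) (SX SY : finType) (sX : strategy R SX SY SX)
  (sY : strategy R SX SY SY) h : \sum_b sYp sX sY h b = 1.
Proof.
rewrite /sYp; case: eqP => Hn; first exact: Defs.pmf_sum1.
rewrite -big_distrl /=.
have -> : \sum_b Mw sX sY [seq i.2 | i <- h] b = Nw sX sY [seq i.2 | i <- h].
  rewrite /Mw /Nw /sumT exchange_big /=; apply: eq_bigr => xs _.
  by rewrite -big_distrr /= Defs.pmf_sum1 mulr1.
by rewrite divff //; apply/eqP.
Qed.

Definition sYs (R : realType) (SX SY : finType) (sX : strategy R SX SY SX)
  (sY : strategy R SX SY SY) : strategy R SX SY SY :=
  fun h => Distr (sYp_ge0 sX sY h) (sYp_sum1 sX sY h).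

Lemma K2 (R : realType) (SX SY : finType) (sX : strategy R SX SY SX)
  (sY : strategy R SX SY SY) h :
  hw (fun _ _ => 1) (fun k => sYs sX sY k) [::] h = Nw sX sY (map snd h).
Proof.
elim/last_ind: h => [|h [x y] IH].
  by rewrite /Nw /= sumT0.
rewrite hw_rcons IH map_rcons Nw_rcons Mw_eq /=; ring.
Qed.


Lemma map_snd_zip (A B : Type) (xs : seq A) (ys : seq B) :
  size xs = size ys -> [seq i.2 | i <- zip xs ys] = ys.
Proof. by move=> H; rewrite -/(unzip2 _) unzip2_zip // H. Qed.

Lemma stage_sumT (R : realType) (SX SY : finType) (phi : SX -> SY -> R)
  (s1 : strategy R SX SY SX) (s2 : strategy R SX SY SY) t :
  stage_exp phi s1 s2 t = sumT t (fun s => \sum_p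
     hw (fun k => s1 k) (fun k => s2 k) [::] (rcons s p) * phi p.1 p.2).
Proof.
rewrite /stage_exp big_tuple_rcons; apply: eq_bigr => s _; apply: eq_bigr => p _.
rewrite hprob_hw (tnth_nth p) /= nth_rcons size_tuple ltnn eqxx.
by [].
Qed.

Lemma play1 (R : realType) (SX SY : finType) (phi : SX -> SY -> R)
  (sX : strategy R SX SY SX) (sY : strategy R SX SY SY) t :
  stage_exp phi (opp_conditioned (fX sX)) sY t =
  sumT t (fun ys => \sum_x \sum_y fval sX ys x * phi x y * Mw sX sY ys y).
Proof.
rewrite stage_sumT sumT_zip /sumT exchange_big /=; apply: eq_bigr => ys _.
transitivity (\sum_(xs : t.-tuple SX) \sum_x \sum_y
   fval sX ys x * phi x y * (Bw sX sY (zip xs ys) * sY (zip xs ys) y)).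
  apply: eq_bigr => xs _; rewrite [RHS]pair_big; apply: eq_bigr => -[x y] _ /=.
  rewrite hw_rcons /opp_conditioned /= map_snd_zip ?size_tuple //.
  rewrite /Bw /=; ring.
rewrite exchange_big; apply: eq_bigr => x _; rewrite exchange_big; apply: eq_bigr => y _.
by rewrite /Mw size_tuple /sumT big_distrr.
Qed.

Lemma play2 (R : realType) (SX SY : finType) (phi : SX -> SY -> R)
  (sX : strategy R SX SY SX) (sY : strategy R SX SY SY) t :
  stage_exp phi sX (sYs sX sY) t =
  sumT t (fun ys => \sum_x \sum_y fval sX ys x * phi x y * Mw sX sY ys y).
Proof.
rewrite stage_sumT sumT_zip /sumT exchange_big /=; apply: eq_bigr => ys _.
transitivity (\sum_(xs : t.-tuple SX) \sum_x \sum_y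
   Aw sX (zip xs ys) * sX (zip xs ys) x * phi x y * Mw sX sY ys y).
  apply: eq_bigr => xs _; rewrite [RHS]pair_big; apply: eq_bigr => -[x y] _ /=.
  have E := Mw_eq sX sY (zip xs ys) y.
  rewrite map_snd_zip ?size_tuple // in E.
  rewrite hw_rcons hw_split K2 map_snd_zip ?size_tuple // E /sYs /Aw /=; ring.
rewrite exchange_big; apply: eq_bigr => x _; rewrite exchange_big; apply: eq_bigr => y _.
by rewrite /fval size_tuple /sumT !big_distrl.
Qed.

Theorem proposition3 (R : realType) (SX SY : finType)
  (hX : (0 < #|SX|)%N) (hY : (0 < #|SY|)%N)
  (phi : SX -> SY -> R) (lam : R) (hlam0 : 0 <= lam) (hlam1 : lam < 1)
  (sX : strategy R SX SY SX) :
  autocratic phi lam sX ->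
  exists f : seq SY -> distr R SX, autocratic phi lam (opp_conditioned f).
Proof.
move=> H; exists (fX sX) => sY.
have -> : disc_partial phi lam (opp_conditioned (fX sX)) sY =
          disc_partial phi lam sX (sYs sX sY).
  apply: funext => n; apply: eq_bigr => t _.
  by rewrite play1 play2.
exact: H.
Qed.
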